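(* Let $p,n\in\mathbb N$ with $p\ge n\ge 10$, and write $p=k(n-1)+r$ with $k\in\mathbb N$ and $r\in\{0,1,\ldots,n-2\}$. Let $T_n$ be a tree on $n$ vertices with $\Delta(T_n)=n-4$, and let $G\in\mathrm{Ex}(p;T_n)$. If $G$ is connected and $\Delta(G)\le n-4$, then $$p\le \min\Big\{\frac{3(n-1+r)+((-1)^n+(-1)^r)/2}2,\ \frac{r(n-1-r)}2\Big\},$$ and in particular $p\le 2n-7$.
   Context: All graphs are finite simple graphs; $\Delta(G)$ is the maximum degree of $G$. For a graph $L$, $\mathrm{ex}(p;L)$ is the maximum number of edges in a graph on $p$ vertices containing no subgraph isomorphic to $L$, and $\mathrm{Ex}(p;L)$ is the set of graphs on $p$ vertices containing no copy of $L$ and having exactly $\mathrm{ex}(p;L)$ edges. *)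

(* Defs.v *)
From mathcomp Require Import all_boot all_order all_algebra.
Set Implicit Arguments. Unset Strict Implicit. Unset Printing Implicit Defensive.

Definition simple_graph (V : finType) (g : rel V) : Prop :=
  symmetric g /\ irreflexive g.

Definition nedges (V : finType) (g : rel V) : nat :=
  #|[set E : {set V} | [exists x, exists y, g x y && (E == [set x; y])]]|.

Definition degree (V : finType) (g : rel V) (v : V) : nat := #|[pred u | g v u]|.

(* maximum degree Delta(G) (0 for the empty graph) *)
Definition maxdeg (V : finType) (g : rel V) : nat := \max_(v : V) degree g v.

Definition connected_graph (V : finType) (g : rel V) : Prop :=
  forall x y : V, connect g x y.

Definition acyclic (V : finType) (g : rel V) : Prop :=
  forall s : seq V, uniq s -> 3 <= size s -> ~~ cycle g s.

Definition is_tree (V : finType) (g : rel V) : Prop :=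
  simple_graph g /\ connected_graph g /\ acyclic g.

Definition contains_copy (W V : finType) (L : rel W) (g : rel V) : Prop :=
  exists f : W -> V, injective f /\ forall x y, L x y -> g (f x) (f y).

Definition in_Ex (W : finType) (p : nat) (L : rel W) (g : rel 'I_p) : Prop :=
  [/\ simple_graph g, ~ contains_copy L g &
      forall h : rel 'I_p, simple_graph h -> ~ contains_copy L h ->
        nedges h <= nedges g].

(* Main.v *)
Require Import Defs.
From mathcomp Require Import all_boot all_order all_algebra zify lra.
Import GRing.Theory Num.Theory.
Set Implicit Arguments. Unset Strict Implicit. Unset Printing Implicit Defensive.

Lemma degreeE (V : finType) (g : rel V) v : degree g v = #|[set u | g v u]|.
Proof. by apply: eq_card => u; rewrite inE. Qed.

Lemma handshake (V : finType) (g : rel V) : simple_graph g ->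
  2 * nedges g = \sum_v degree g v.
Proof.
case=> gs gi.
set A := [set E : {set V} | [exists x, exists y, g x y && (E == [set x; y])]].
have cardE2 : forall E, E \in A -> #|E| = 2.
  move=> E; rewrite inE => /existsP[x /existsP[y /andP[gxy /eqP->]]].
  rewrite cards2; case: eqP gxy => // ->; by rewrite gi.
have L : \sum_(E in A) #|E| = 2 * #|A|.
  by rewrite (eq_bigr (fun _ => 2)) // sum_nat_const mulnC.
rewrite /nedges -/A -L.
transitivity (\sum_(E in A) \sum_(v | v \in E) 1).
  by apply: eq_bigr => E _; rewrite sum1_card.
rewrite (exchange_big_dep predT) //=.
apply: eq_bigr => v _.
rewrite sum1_card degreeE.
rewrite (@eq_card _ _ [set [set v; u] | u in [set u | g v u]]); last first.
  move=> E; change ((E \in A) && (v \in E) = (E \in [set [set v; u] | u in [set u | g v u]])).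
  apply/andP/idP.
  - case; rewrite inE => /existsP[x /existsP[y /andP[gxy /eqP->]]].
    rewrite in_set2 => /orP[]/eqP ->; apply/imsetP.
      by exists y; rewrite ?inE.
    by exists x; rewrite ?inE 1?gs // setUC.
  - case/imsetP=> u; rewrite inE => gvu ->; split; last by rewrite set21.
    by rewrite inE; apply/existsP; exists v; apply/existsP; exists u; rewrite gvu eqxx.
apply: card_in_imset => u u'; rewrite !inE => gu gu' E.
have : u \in [set v; u'] by rewrite -E set22.
rewrite in_set2 => /orP[/eqP uv|/eqP //].
by move: gu; rewrite uv gi.
Qed.

Lemma sum_deg_le (V : finType) (g : rel V) : \sum_v degree g v <= #|V| * maxdeg g.
Proof.
rewrite -sum_nat_const; apply: leq_sum => v _; exact: leq_bigmax.
Qed.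

Lemma inj_card (W V : finType) (A : {pred W}) (B : {pred V}) (f : W -> V) :
  injective f -> (forall u, u \in A -> f u \in B) -> #|A| <= #|B|.
Proof.
move=> fi H; rewrite -(card_imset A fi); apply: subset_leq_card.
by apply/subsetP => y /imsetP[x xA ->]; exact: H.
Qed.

Lemma deg_lb (V : finType) (g : rel V) w (A : {set V}) :
  (forall y, y \in A -> y != w -> g w y) -> #|A| <= (degree g w).+1.
Proof.
move=> H; rewrite degreeE.
have sub : A \subset w |: [set u | g w u].
  apply/subsetP => y yA; rewrite !inE; case: eqP => //= /eqP yw; exact: H.
apply: (leq_trans (subset_leq_card sub)); rewrite cardsU1.
by case: (_ \notin _).
Qed.

Lemma conn_const n (T : rel 'I_n) (phi : 'I_n -> nat) :
  (forall x y, T x y -> phi x = phi y) -> forall x y, connect T x y -> phi x = phi y.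
Proof.
move=> H x y /connectP[s pth ->]; elim: s x pth => //= a s IH x /andP[Txa pth].
by rewrite (H _ _ Txa); exact: IH.
Qed.

Lemma block_inj n p (f : 'I_n -> 'I_p) q : 1 < n -> injective f ->
  (forall x, f x %/ (n-1) = q) -> False.
Proof.
move=> n1 fi Hq.
have n1p : 0 < n - 1 by lia.
pose h x : 'I_(n-1) := Ordinal (ltn_pmod (f x) n1p).
have hi : injective h.
  move=> x y /(congr1 val) /= E; apply: fi; apply: val_inj => /=.
  by rewrite (divn_eq (f x) (n-1)) (divn_eq (f y) (n-1)) !Hq E.
have := leq_card h hi; rewrite !card_ord; lia.
Qed.

Lemma sum_split p off a b : off <= p ->
  \sum_(i < p) (if i < off then a else b) = off * a + (p - off) * b.
Proof.
move=> H; rewrite -(big_mkord xpredT (fun i => if i < off then a else b)).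
rewrite (@big_cat_nat _ _ _ off 0 p _ _ (leq0n off) H) /=.
rewrite (eq_big_nat _ _ (F2 := fun _ => a)); last by move=> i /andP[_ ->].
rewrite (eq_big_nat _ _ (F1 := fun i => if i < off then a else b) (F2 := fun _ => b)); last first.
  by move=> i /andP[h1 _]; rewrite ltnNge h1.
by rewrite !sum_nat_const_nat subn0.
Qed.

Definition Spred (h m j : nat) : bool := ((0 < j) && (j <= h)) || (m - h <= j).
Definition Dd (m a b : nat) : nat := if b <= a then a - b else a + m - b.
Definition Mq (q a b : nat) : bool := ((a < q) && (b == a + q)) || ((b < q) && (a == b + q)).
Definition Rr (fl : bool) (m h q a b : nat) : bool := Spred h m (Dd m a b) || fl && Mq q a b.

Lemma card_set_sum m (P : pred nat) : #|[set j : 'I_m | P j]| = \sum_(0 <= j < m) P j.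
Proof.
rewrite big_mkord -sum1_card big_mkcond /=; apply: eq_bigr => j _.
by rewrite inE; case: (P j).
Qed.

Lemma card_S h m : 2 * h < m -> \sum_(0 <= j < m) Spred h m j = 2 * h.
Proof.
move=> H.
rewrite (@big_cat_nat _ _ _ 1 0 m) //=; last by lia.
rewrite (@big_cat_nat _ _ _ h.+1 1 m) //=; last by lia.
rewrite (@big_cat_nat _ _ _ (m - h) h.+1 m) //=; last by lia.
rewrite (eq_big_nat _ _ (F1 := fun j => nat_of_bool (Spred h m j)) (F2 := fun _ => 0)); last first.
  move=> i /andP[a b]; have -> : Spred h m i = false by rewrite /Spred; lia. by [].
rewrite (eq_big_nat _ _ (F1 := fun j => nat_of_bool (Spred h m j)) (F2 := fun _ => 1) (m := 1)); last first.
  move=> i /andP[a b]; have -> : Spred h m i = true by rewrite /Spred; lia. by [].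
rewrite (eq_big_nat _ _ (F1 := fun j => nat_of_bool (Spred h m j)) (F2 := fun _ => 0) (m := h.+1)); last first.
  move=> i /andP[a b]; have -> : Spred h m i = false by rewrite /Spred; lia. by [].
rewrite (eq_big_nat _ _ (F1 := fun j => nat_of_bool (Spred h m j)) (F2 := fun _ => 1) (m := m - h)); last first.
  move=> i /andP[a b]; have -> : Spred h m i = true by rewrite /Spred; lia. by [].
all: rewrite ?sum_nat_const_nat; lia.
Qed.

Lemma Dd_lt m a b : a < m -> b < m -> Dd m a b < m.
Proof. by move=> am bm; rewrite /Dd; case: (leqP b a); lia. Qed.

Lemma card_SD h m a : a < m ->
  #|[set j : 'I_m | Spred h m (Dd m a j)]| = #|[set j : 'I_m | Spred h m j]|.
Proof.
move=> am.
pose phi (j : 'I_m) : 'I_m := Ordinal (Dd_lt am (ltn_ord j)).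
have phi_inj : injective phi.
  move=> j j' /(congr1 val) /=; have := ltn_ord j; have := ltn_ord j'.
  move=> h1 h2 E; apply: ord_inj; move: E; rewrite /Dd; case: (leqP j a); case: (leqP j' a); lia.
rewrite -[RHS](card_preimset _ phi_inj); apply: eq_card => j; by rewrite !inE /=.
Qed.

Lemma card_M q m a : 0 < q -> 2 * q <= m -> a < m ->
  #|[set j : 'I_m | Mq q a j]| = (a < 2 * q).
Proof.
move=> q0 qm am.
case: (ltnP a q) => aq.
  have pm : a + q < m by lia.
  rewrite (_ : [set j | _] = [set Ordinal pm]); last first.
    apply/setP => j; rewrite !inE /Mq -val_eqE /=; lia.
  by rewrite cards1; have -> : (a < 2 * q) = true by lia.
case: (ltnP a (2 * q)) => a2q.
  have pm : a - q < m by lia.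
  rewrite (_ : [set j | _] = [set Ordinal pm]); last first.
    apply/setP => j; rewrite !inE /Mq -val_eqE /=; lia.
  by rewrite cards1.
rewrite (_ : [set j | _] = set0) ?cards0 //.
apply/setP => j; rewrite !inE /Mq; lia.
Qed.

Lemma card_R fl m h q a : a < m -> 2 * h < m -> h < q -> 2 * q <= m ->
  #|[set j : 'I_m | Rr fl m h q a j]| = 2 * h + (fl && (a < 2 * q)).
Proof.
move=> am hm hq qm.
have -> : [set j : 'I_m | Rr fl m h q a j] =
   [set j : 'I_m | Spred h m (Dd m a j)] :|: [set j : 'I_m | fl && Mq q a j].
  by apply/setP => j; rewrite !inE.
rewrite cardsU.
have -> : [set j : 'I_m | Spred h m (Dd m a j)] :&: [set j : 'I_m | fl && Mq q a j] = set0.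
  apply/setP => j; rewrite !inE /Spred /Dd /Mq; have jm := ltn_ord j.
  by case: fl; case: (leqP j a) => /=; lia.
rewrite cards0 subn0 card_SD // card_set_sum card_S //.
case: fl => /=.
  by rewrite card_M //; lia.
by rewrite (_ : [set j | _] = set0) ?cards0 // ; apply/setP => j; rewrite !inE.
Qed.

Lemma Rr_irr fl m h q a : h < m -> 0 < q -> Rr fl m h q a a = false.
Proof. by rewrite /Rr /Spred /Dd /Mq leqnn; case: fl; lia. Qed.

Lemma Rr_sym fl m h q a b : a < m -> b < m -> Rr fl m h q a b = Rr fl m h q b a.
Proof. by move=> am bm; rewrite /Rr /Spred /Dd /Mq; case: fl; case: (leqP b a); case: (leqP a b); lia. Qed.

Lemma div_block d q y : 0 < d -> q * d <= y -> y < q * d + d -> y %/ d = q.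
Proof.
move=> d0 a b; rewrite -(subnKC a) divnMDl // divn_small ?addn0 //; lia.
Qed.

Lemma div_bounds d y : 0 < d -> y %/ d * d <= y /\ y < y %/ d * d + d.
Proof.
move=> d0; have := divn_eq y d; have := ltn_pmod y d0.
set q := y %/ d; set s := y %% d; lia.
Qed.

Lemma block_deg p (g : rel 'I_p) (x : 'I_p) base L :
  base + L <= p ->
  (forall y : 'I_p, base <= y -> y < base + L -> y != x -> g x y) ->
  L <= (degree g x).+1.
Proof.
move=> bL H.
pose A := [set y : 'I_p | (base <= y) && (y < base + L)].
have cA : L <= #|A|.
  have := @inj_card _ _ 'I_L A (fun j => insubd x (base + j)).
  rewrite card_ord; apply.
    move=> j j' /(congr1 val); rewrite !val_insubd.
    have := ltn_ord j; have := ltn_ord j'.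
    case: ifP => h1; case: ifP => h2 a b E; apply: ord_inj; lia.
  move=> j _; rewrite inE val_insubd; have := ltn_ord j; case: ifP => h1; lia.
apply: (leq_trans cA); apply: deg_lb => y; rewrite inE => /andP[a b]; exact: H.
Qed.

Definition F1 (n p : nat) : rel 'I_p := fun x y => (x != y) && (x %/ (n-1) == y %/ (n-1)).
Arguments F1 : clear implicits.

Lemma F1_simple n p : simple_graph (F1 n p).
Proof.
split; first by move=> x y; rewrite /F1 eq_sym [_ %/ _ == _]eq_sym.
by move=> x; rewrite /F1 eqxx.
Qed.

Lemma F1_free n p (T : rel 'I_n) : 1 < n -> connected_graph T -> ~ contains_copy T (F1 n p).
Proof.
move=> n1 Tc [f [fi fH]].
have n0 : 0 < n by lia.
pose x0 : 'I_n := Ordinal n0.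
apply: (@block_inj n p f (f x0 %/ (n-1)) n1 fi) => x.
apply: (@conn_const n T (fun x => f x %/ (n-1))); last exact: Tc.
by move=> a b /fH /andP[_ /eqP].
Qed.

Lemma F1_deg n p k r : 1 < n -> p = k * (n-1) + r -> r < n - 1 -> forall x : 'I_p,
  (if x < k * (n-1) then n-2 else r-1) <= degree (F1 n p) x.
Proof.
move=> n1 pE rn x.
have d0 : 0 < n - 1 by lia.
have x_p := ltn_ord x.
have [b1 b2] := div_bounds x d0.
set q := x %/ (n-1) in b1 b2.
case: ifP => xk.
  have qk : q < k by rewrite /q ltn_divLR.
  have qk' : q * (n-1) + (n-1) <= k * (n-1).
    by rewrite addnC -mulSn leq_mul2r qk orbT.
  have := @block_deg p (F1 n p) x (q * (n-1)) (n-1) ltac:(lia).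
  have H : forall y : 'I_p, q * (n - 1) <= y -> y < q * (n - 1) + (n - 1) -> y != x -> F1 n p x y.
    move=> y a b yx; rewrite /F1 eq_sym yx /=; apply/eqP.
    by rewrite (div_block d0 a b).
  move/(_ H); lia.
have xp : x < k * (n-1) + r by rewrite -pE.
have qk : q = k.
  apply: div_block => //; move: xk xp; set K := k * (n-1); lia.
have := @block_deg p (F1 n p) x (k * (n-1)) r ltac:(lia).
have H : forall y : 'I_p, k * (n - 1) <= y -> y < k * (n - 1) + r -> y != x -> F1 n p x y.
  move=> y a b yx; rewrite /F1 eq_sym yx /=; apply/eqP.
  rewrite -/q qk; symmetry; apply: div_block => //; move: xk xp a b; set K := k * (n-1); lia.
move/(_ H); lia.
Qed.

Definition col2 (n c : nat) (x : nat) : nat := if x < c * (n-1) then x %/ (n-1) else c.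

Definition F2 (n c m h q : nat) (fl : bool) (p : nat) : rel 'I_p := fun x y =>
  (x != y) && (col2 n c x == col2 n c y) &&
  ((col2 n c x < c) || Rr fl m h q (x - c * (n-1)) (y - c * (n-1))).
Arguments F2 : clear implicits.

Lemma lt_sub_off a K m p : 0 < m -> p = K + m -> a < p -> a - K < m.
Proof. lia. Qed.

Lemma col2_lt n c x : 1 < n -> (col2 n c x < c) = (x < c * (n-1)).
Proof.
move=> n1; rewrite /col2; case: ifP => h.
  by rewrite ltn_divLR ?h //; lia.
by rewrite ltnn.
Qed.

Lemma F2_simple n c m h q fl p : 1 < n -> 0 < m -> p = c * (n-1) + m -> 
  simple_graph (F2 n c m h q fl p).
Proof.
move=> n1 m0 pE; split; last by move=> x; rewrite /F2 eqxx.
move=> x y; rewrite /F2 eq_sym [col2 n c y == _]eq_sym.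
case E: (col2 n c x == col2 n c y); last by rewrite !andbF.
rewrite !andbT (eqP E).
rewrite Rr_sym //.
  exact: lt_sub_off m0 pE (ltn_ord x).
exact: lt_sub_off m0 pE (ltn_ord y).
Qed.

Lemma F2_region_deg n c m h q fl p (w : 'I_p) : 1 < n -> p = c * (n-1) + m ->
  2 * h < m -> h < q -> 2 * q <= m -> c * (n-1) <= w ->
  degree (F2 n c m h q fl p) w = 2 * h + (fl && (w - c * (n-1) < 2 * q)).
Proof.
move=> n1 pE hm hq qm wo.
set off := c * (n-1) in pE wo *.
have embP : forall j : 'I_m, off + j < p by move=> j; have := ltn_ord j; lia.
pose emb (j : 'I_m) : 'I_p := Ordinal (embP j).
have emb_inj : injective emb.
  by move=> j j' /(congr1 val) /= E; apply: ord_inj; lia.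
have wm : w - off < m by have := ltn_ord w; lia.
rewrite degreeE -(card_R fl wm hm hq qm) -(card_imset _ emb_inj).
apply: eq_card => y; rewrite inE; apply/idP/imsetP.
- rewrite /F2 => /andP[/andP[yw]].
  rewrite /col2 -/off ltnNge wo /=.
  case: ifP => yo.
    move/eqP=> E; have : y %/ (n-1) < c by rewrite ltn_divLR //; lia.
    by rewrite -E ltnn.
  move=> _ /= HR.
  have ym : y - off < m by have := ltn_ord y; lia.
  exists (Ordinal ym); first by rewrite inE; move: HR; rewrite ltnn.
  apply: ord_inj => /=; move: yo; lia.
- case=> j; rewrite inE => HR ->.
  rewrite /F2 /col2 -/off ltnNge wo /= ltnNge (_ : off <= off + j) ?leq_addr //= eqxx ltnn /=.
  rewrite (_ : off + j - off = j); last by lia.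
  rewrite HR !andbT; apply/negP => /eqP E.
  have : w - off = j by rewrite E /=; lia.
  move=> wj; move: HR; rewrite wj Rr_irr //; lia.
Qed.

Lemma F2_clique_deg n c m h q fl p (x : 'I_p) : 1 < n -> p = c * (n-1) + m ->
  x < c * (n-1) -> n - 2 <= degree (F2 n c m h q fl p) x.
Proof.
move=> n1 pE xo.
have d0 : 0 < n - 1 by lia.
have [b1 b2] := div_bounds x d0.
set Q := x %/ (n-1) in b1 b2.
have Qc : Q < c by rewrite /Q ltn_divLR.
have Qc' : Q * (n-1) + (n-1) <= c * (n-1).
  by rewrite addnC -mulSn leq_mul2r Qc orbT.
have := @block_deg p (F2 n c m h q fl p) x (Q * (n-1)) (n-1) ltac:(move: pE; set K := c * (n-1); lia).
have H : forall y : 'I_p, Q * (n - 1) <= y -> y < Q * (n - 1) + (n - 1) -> y != x -> F2 n c m h q fl p x y.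
  move=> y a b yx; rewrite /F2 eq_sym yx /= col2_lt // xo /= andbT.
  rewrite /col2 xo ifT; last by move: Qc' b; set K := c * (n-1); lia.
  by apply/eqP; rewrite (div_block d0 a b).
move/(_ H); lia.
Qed.

Lemma F2_free n c m h q (fl : bool) p (T : rel 'I_n) (v : 'I_n) : 1 < n -> p = c * (n-1) + m ->
  2 * h < m -> h < q -> 2 * q <= m -> 2 * h + fl < degree T v ->
  connected_graph T -> ~ contains_copy T (F2 n c m h q fl p).
Proof.
move=> n1 pE hm hq qm dv Tc [f [fi fH]].
have Hc : forall x, col2 n c (f x) = col2 n c (f v).
  move=> x; apply: (@conn_const n T (fun x => col2 n c (f x))); last exact: Tc.
  by move=> a b /fH /andP[/andP[_ /eqP]].
case: (ltnP (col2 n c (f v)) c) => Qc.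
  have Ho : forall x, f x < c * (n-1) by move=> x; rewrite -col2_lt // Hc.
  apply: (@block_inj n p f (col2 n c (f v)) n1 fi) => x.
  by rewrite -(Hc x) /col2 Ho.
have Ho : forall x, c * (n-1) <= f x.
  by move=> x; rewrite leqNgt -col2_lt // Hc -leqNgt.
have X : degree T v <= degree (F2 n c m h q fl p) (f v).
  apply: (@inj_card _ _ [pred u | T v u] [pred u | F2 n c m h q fl p (f v) u] f fi).
  by move=> u; rewrite !inE; exact: fH.
rewrite F2_region_deg // in X.
have : (fl && (f v - c * (n - 1) < 2 * q) : nat) <= fl by case: (fl); case: (_ < _).
lia.
Qed.

Lemma sum_indic p (z : 'I_p) : \sum_(x : 'I_p) (x == z : nat) = 1.
Proof. by rewrite (bigD1 z) //= eqxx big1 ?addn0 // => i /negbTE ->. Qed.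

Lemma region_lb (x p off m q h : nat) (fl b : bool) : x < p -> p = off + m -> (x < off) = false ->
  b + 2 * q = m -> 2 * h + fl <= 2 * h + (fl && (x - off < 2 * q)) + (x == p.-1).
Proof. by case: fl; case: b => /=; lia. Qed.

Lemma k_not_ge2 p n k r (T : rel 'I_n) (G : rel 'I_p) (v : 'I_n) :
  10 <= n -> p = k * (n - 1) + r -> r <= n - 2 ->
  connected_graph T -> degree T v = n - 4 -> @in_Ex _ p T G ->
  2 * nedges G <= p * (n - 4) ->
  k * (n - 1) * (n - 2) + r * (r - 1) <= p * (n - 4) -> 2 <= k -> False.
Proof.
move=> n10 pE rn Tc dv [Gs Gfree Gmax] Gup H1 k2.
have n1 : 1 < n by lia.
have [k' kE] : exists k', k = k'.+2 by exists (k - 2); lia.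
subst k.
set c := k'.+1; set m := n - 1 + r.
set d := n - 5.
set fl := odd d; set h := d./2; set q := m./2.
have dE : fl + 2 * h = d by rewrite /fl /h -[RHS]odd_double_half -muln2 mulnC.
have mE : odd m + 2 * q = m by rewrite /q -[RHS]odd_double_half -muln2 mulnC.
have pE2 : p = c * (n-1) + m.
  by rewrite pE /m /c mulSn; lia.
have m0 : 0 < m by lia.
have hm : 2 * h < m by lia.
have hq : h < q by move: mE dE; case: (odd m); case: (fl) => /=; lia.
have qm : 2 * q <= m by lia.
have dT : 2 * h + fl < degree T v by rewrite dv; lia.
have e2 := Gmax _ (@F2_simple n c m h q fl p n1 m0 pE2) (@F2_free n c m h q fl p T v n1 pE2 hm hq qm dT Tc).
set off := c * (n-1) in pE2.
have p0 : 0 < p by lia.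
have zp : p.-1 < p by lia.
pose z : 'I_p := Ordinal zp.
have S : \sum_(x : 'I_p) (if x < off then n - 2 else 2 * h + fl)
         <= \sum_(x : 'I_p) (degree (F2 n c m h q fl p) x + (x == z)).
  apply: leq_sum => x _.
  case: ifP => xo.
    by have := @F2_clique_deg n c m h q fl p x n1 pE2 xo; lia.
  rewrite F2_region_deg //; last by lia.
  rewrite -val_eqE /= -/off; exact: (@region_lb x p off m q h fl (odd m) (ltn_ord x) pE2 xo mE).
rewrite big_split /= sum_indic sum_split in S; last by lia.
rewrite -handshake in S; last exact: F2_simple.
have : off * (n - 2) + (off + m - off) * (2 * h + fl) <= (off + m) * (n - 4) + 1.
  rewrite -pE2; move: S e2 Gup.
  move: (off * (n-2)) (p * (n-4)) ((p - off) * (2 * h + fl)) => A B C.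
  lia.
rewrite (_ : off + m - off = m); last by lia.
rewrite (_ : 2 * h + fl = n - 5); last by lia.
move=> H2.
have H3 : 2 * off <= m + 1.
  move: H2; rewrite (_ : n - 2 = (n - 4) + 2); last by lia.
  rewrite (_ : n - 4 = (n - 5) + 1); last by lia.
  rewrite !mulnDr !mulnDl; lia.
have : n - 1 <= off by rewrite /off /c mulSn leq_addr.
move=> Hoff.
have rE : r = n - 2 by lia.
move: H1; rewrite pE rE.
rewrite (_ : n - 2 - 1 = (n - 4) + 1); last by lia.
rewrite (_ : n - 2 = (n - 4) + 2); last by lia.
have K0 : 0 < k'.+2 * (n - 1) by rewrite mulSn; lia.
move: K0; move: (k'.+2 * (n - 1)) => K K0.
rewrite !mulnDr !mulnDl.
move: (K * (n - 4)) ((n - 4) * (n - 4)) => A B; lia.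
Qed.

Lemma key_arith N r : r <= N + 2 -> (N + 3) * (N + 2) + r * (r - 1) <= (N + 3 + r) * N ->
  2 * (N + 3 + r) <= r * (N + 3 - r).
Proof.
move=> rn H.
have [s sE] : exists s, N + 3 = r + s by exists (N + 3 - r); lia.
have NE : N = r + s - 3 by lia.
have s1 : 1 <= s by lia.
rewrite sE addKn.
case: r rn H sE NE => [|r] rn H sE NE.
  move: H; rewrite NE; nia.
rewrite subn1 /= in H.
nia.
Qed.

Lemma r_arith N r : r <= N + 2 -> 2 * (N + 3 + r) <= r * (N + 3 - r) -> r <= N - 2.
Proof. move=> rn H. nia. Qed.

Lemma sign_ge (n : nat) : ((-1 : rat) <= (-1) ^+ n)%R.
Proof. rewrite -signr_odd; case: (odd n); rewrite /= ?expr0 ?expr1; lra. Qed.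

Theorem lemma2p3 (p n k r : nat) (T : rel 'I_n) (G : rel 'I_p) :
  (10 <= n)%N -> (n <= p)%N ->
  p = (k * (n - 1) + r)%N -> (r <= n - 2)%N ->
  is_tree T -> maxdeg T = (n - 4)%N ->
  @in_Ex _ p T G ->
  connected_graph G -> (maxdeg G <= n - 4)%N ->
  [/\ (p%:R <= (3%:R * (n - 1 + r)%:R
                 + ((-1) ^+ n + (-1) ^+ r) / 2%:R) / 2%:R :> rat)%R,
      (p%:R <= (r * (n - 1 - r))%:R / 2%:R :> rat)%R
    & (p <= 2 * n - 7)%N].
Proof.
move=> n10 np pE rn [Ts [Tc Tac]] mT GEx Gc mG.
have [Gs Gfree Gmax] := GEx.
have n1 : 1 < n by lia.
have Gup : 2 * nedges G <= p * (n - 4).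
  rewrite handshake //; apply: (leq_trans (sum_deg_le G)).
  by rewrite card_ord leq_mul2l mG orbT.
have [v dv] : exists v, degree T v = n - 4.
  have n0 : 0 < #|'I_n| by rewrite card_ord; lia.
  case: (eq_bigmax (degree T) n0) => v Hv; exists v; rewrite -Hv; exact: mT.
have H1 : k * (n - 1) * (n - 2) + r * (r - 1) <= p * (n - 4).
  have e1 := Gmax _ (F1_simple n p) (@F1_free n p T n1 Tc).
  have S : \sum_(x : 'I_p) (if x < k * (n - 1) then n - 2 else r - 1)
           <= \sum_(x : 'I_p) degree (F1 n p) x.
    by apply: leq_sum => x _; apply: F1_deg => //; lia.
  rewrite sum_split in S; last by lia.
  rewrite -handshake in S; last exact: F1_simple.
  rewrite (_ : p - k * (n - 1) = r) in S; last by lia.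
  move: S e1 Gup; rewrite -mulnA.
  move: (k * ((n - 1) * (n - 2))) (r * (r - 1)) (p * (n - 4)) => A B C; lia.
have k1 : k = 1.
  case: k pE H1 => [|[|k']] pE H1 //.
    by move: pE np; lia.
  exfalso; exact: (@k_not_ge2 p n k'.+2 r T G v n10 pE rn Tc dv GEx Gup H1).
subst k; rewrite mul1n in pE H1.
have [N nE] : exists N, n = N + 4 by exists (n - 4); lia.
have e1 : n - 1 = N + 3 by lia.
have e2 : n - 2 = N + 2 by lia.
have e4 : n - 4 = N by lia.
have key : 2 * (n - 1 + r) <= r * (n - 1 - r).
  rewrite e1; apply: key_arith; first lia.
  by move: H1; rewrite pE e1 e2 e4.
have r6 : r <= n - 6.
  have := @r_arith N r ltac:(lia); rewrite -e1; move/(_ key); lia.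
split.
- rewrite pE.
  have P9 : (9%:R <= (n - 1 + r)%:R :> rat)%R by rewrite ler_nat; lia.
  have := sign_ge n; have := sign_ge r.
  move: ((n - 1 + r)%:R)%R P9 => P P9 a b.
  lra.
- rewrite ler_pdivlMr ?ltr0n // -natrM ler_nat pE; lia.
- lia.
Qed.
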